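(* Let $p>2$ be an even integer such that $p/2$ is odd. Then there exists a subset $\mathcal{X}$ of $\mathbb{P}^2_\circ$ with $|\mathcal{X}|=|B(2,p-1)\cap\mathbb{P}^2_\circ|+1$ and $$\kappa(\mathcal{X})\le\kappa(B(2,p-1)\cap\mathbb{P}^2_\circ)+\frac{p}{2}+1.$$ Moreover, every subset $\mathcal{X}$ of $\mathbb{P}^2_\circ$ with these two properties satisfies at least one of: (i) some point of $B(2,p-1)\cap\mathbb{P}^2_\circ$ is not in $\mathcal{X}$; (ii) some point of $\mathcal{X}$ is not in $B(2,p)\cap\mathbb{P}^2_\circ$.
   Context: A point of $\mathbb{Z}^2$ is primitive if its coordinates are relatively prime; $\mathbb{P}^2_\circ$ denotes the set of primitive points of $\mathbb{Z}^2$ whose first non-zero coordinate is positive. $B(2,p)=\{x\in\mathbb{R}^2:\|x\|_1\le p\}$. For a finite $\mathcal{X}\subset\mathbb{R}^2$, $\kappa(\mathcal{X})=\max_{i\in\{1,2\}}\sum_{x\in\mathcal{X}}|x_i|$. *)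

(* Defs.v *)
(* integer points as Z * Z, finite sets as duplicate-free lists. *)
From Stdlib Require Import ZArith List Bool.
Import ListNotations.
Open Scope Z_scope.
Open Scope bool_scope.

Definition in_P2o (x : Z * Z) : Prop :=
  Z.gcd (fst x) (snd x) = 1 /\
  (0 < fst x \/ (fst x = 0 /\ 0 < snd x)).

Definition in_P2o_b (x : Z * Z) : bool :=
  (Z.gcd (fst x) (snd x) =? 1) &&
  ((0 <? fst x) || ((fst x =? 0) && (0 <? snd x))).

Definition in_ball (p : Z) (x : Z * Z) : Prop := Z.abs (fst x) + Z.abs (snd x) <= p.

Definition range (p : Z) : list Z :=
  map (fun n => Z.of_nat n - p) (seq 0 (Z.to_nat (2 * p + 1))).

Definition ballP (p : Z) : list (Z * Z) :=
  filter (fun x => in_P2o_b x && (Z.abs (fst x) + Z.abs (snd x) <=? p))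
         (list_prod (range p) (range p)).

Definition kappa (X : list (Z * Z)) : Z :=
  Z.max (fold_right Z.add 0 (map (fun x => Z.abs (fst x)) X))
        (fold_right Z.add 0 (map (fun x => Z.abs (snd x)) X)).

(* Main.v *)
Require Import Defs.
From Stdlib Require Import ZArith List.
Import ListNotations.
Open Scope Z_scope.
From Stdlib Require Import Permutation Lia Classical.

Lemma nodup_prod {A B : Type} (l1 : list A) (l2 : list B) :
  NoDup l1 -> NoDup l2 -> NoDup (list_prod l1 l2).
Proof.
  induction 1 as [|a l Hn Hd IH]; intros H2; simpl; [constructor|].
  apply NoDup_app.
  - apply FinFun.Injective_map_NoDup; auto. intros x y E; inversion E; auto.
  - auto.
  - intros [x y] Hi Hi2. apply in_map_iff in Hi as [z [E _]]. inversion E; subst.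
    apply in_prod_iff in Hi2 as [Hi2 _]. contradiction.
Qed.

Lemma range_nodup q : NoDup (range q).
Proof.
  unfold range. apply FinFun.Injective_map_NoDup; [|apply seq_NoDup].
  intros x y E. lia.
Qed.

Lemma range_in q z : -q <= z <= q -> In z (range q).
Proof.
  intros H. unfold range. apply in_map_iff. exists (Z.to_nat (z + q)).
  split; [lia|]. apply in_seq. lia.
Qed.

Lemma P2o_b x : in_P2o_b x = true <-> in_P2o x.
Proof.
  unfold in_P2o_b, in_P2o.
  rewrite Bool.andb_true_iff, Bool.orb_true_iff, Bool.andb_true_iff, Z.eqb_eq, Z.eqb_eq, !Z.ltb_lt.
  tauto.
Qed.

Lemma ballP_in q x : 0 <= q -> (In x (ballP q) <-> in_P2o x /\ in_ball q x).
Proof.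
  intros Hq. unfold ballP, in_ball. rewrite filter_In, Bool.andb_true_iff, P2o_b, Z.leb_le.
  destruct x as [a b]. rewrite in_prod_iff. simpl. split.
  - tauto.
  - intros [H1 H2]. split; [split; apply range_in; lia|]. split; [exact H1|exact H2].
Qed.

Lemma ballP_nodup q : NoDup (ballP q).
Proof. apply NoDup_filter, nodup_prod; apply range_nodup. Qed.

Definition sumf (f : Z * Z -> Z) (l : list (Z * Z)) := fold_right Z.add 0 (map f l).

Lemma sumf_perm f l l' : Permutation l l' -> sumf f l = sumf f l'.
Proof. unfold sumf. induction 1; simpl; lia. Qed.

Definition sig (x : Z * Z) : Z * Z :=
  if snd x <? 0 then (- snd x, - fst x) else (snd x, fst x).

Lemma sig_P2o x : in_P2o x -> in_P2o (sig x) /\ sig (sig x) = x.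
Proof.
  destruct x as [a b]; unfold in_P2o, sig; simpl. intros [G P].
  destruct (Z.ltb_spec b 0); simpl.
  - rewrite Z.gcd_opp_l, Z.gcd_opp_r, Z.gcd_comm. idtac; split; [split; [auto|simpl; lia]|].
    destruct (Z.ltb_spec (-a) 0); [f_equal; lia|lia].
  - rewrite Z.gcd_comm. split; [split; [auto|simpl; lia]|].
    destruct (Z.ltb_spec a 0); [lia|]. reflexivity.
Qed.

Lemma sym q : 0 <= q -> sumf (fun x => Z.abs (fst x)) (ballP q) = sumf (fun x => Z.abs (snd x)) (ballP q).
Proof.
  intros Hq.
  assert (P : Permutation (ballP q) (map sig (ballP q))).
  { apply NoDup_Permutation_bis; [apply ballP_nodup| rewrite length_map; lia|].
    intros x Hx. apply in_map_iff. exists (sig x).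
    apply ballP_in in Hx as [H1 H2]; auto. destruct (sig_P2o x H1) as [H3 H4].
    split; auto. apply ballP_in; auto. split; auto.
    unfold in_ball, sig in *. destruct (snd x <? 0); simpl; lia. }
  rewrite (sumf_perm _ _ _ P). unfold sumf. rewrite map_map. f_equal.
  apply map_ext. intros [a b]. unfold sig; simpl. destruct (b <? 0); simpl; lia.
Qed.

Definition f1 (x : Z * Z) := Z.abs (fst x).
Definition f2 (x : Z * Z) := Z.abs (snd x).

Lemma kappaE L : kappa L = Z.max (sumf f1 L) (sumf f2 L).
Proof. reflexivity. Qed.

Theorem proposition5p2 (p : Z) :
  2 < p -> Z.Even p -> Z.Odd (p / 2) ->
  (exists X : list (Z * Z),
      NoDup X /\ (forall x, In x X -> in_P2o x) /\
      Z.of_nat (length X) = Z.of_nat (length (ballP (p - 1))) + 1 /\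
      kappa X <= kappa (ballP (p - 1)) + p / 2 + 1) /\
  (forall X : list (Z * Z),
      NoDup X -> (forall x, In x X -> in_P2o x) ->
      Z.of_nat (length X) = Z.of_nat (length (ballP (p - 1))) + 1 ->
      kappa X <= kappa (ballP (p - 1)) + p / 2 + 1 ->
      (exists y, in_P2o y /\ in_ball (p - 1) y /\ ~ In y X) \/
      (exists x, In x X /\ ~ (in_P2o x /\ in_ball p x))).
Proof.
  intros Hp [m Hm] Ho.
  assert (Hk : p / 2 = m) by (subst; rewrite Z.mul_comm, Z.div_mul; lia).
  rewrite Hk in *. destruct Ho as [j Hj].
  assert (Hq : 0 <= p - 1) by lia.
  set (B := ballP (p - 1)).
  assert (HBin : forall x, In x B <-> in_P2o x /\ in_ball (p-1) x) by (intros; apply ballP_in; auto).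
  assert (HBnd : NoDup B) by apply ballP_nodup.
  split.
  - set (z := (m - 1, m)).
    assert (Hz : In z B).
    { apply HBin. split; [split|].
      + apply Z.bezout_1_gcd. exists (-1), 1. unfold z, fst, snd. lia.
      + simpl. lia.
      + unfold in_ball; simpl. lia. }
    destruct (in_split _ _ Hz) as [l1 [l2 HB]].
    assert (Hl : forall x, In x (l1 ++ l2) -> In x B).
    { intros x Hx. rewrite HB. apply in_app_iff in Hx. apply in_app_iff. simpl. tauto. }
    assert (HP : Permutation B (z :: l1 ++ l2)) by (rewrite HB; apply Permutation_sym, Permutation_middle).
    exists ((1, p-1) :: (p-1, 1) :: l1 ++ l2). split; [|split; [|split]].
    + constructor; [|constructor].
      * intros [E|Hi]; [inversion E; lia|].
        apply Hl, HBin in Hi as [_ Hi]. unfold in_ball in Hi; cbn [fst snd] in Hi. lia.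
      * intros Hi. apply Hl, HBin in Hi as [_ Hi]. unfold in_ball in Hi; cbn [fst snd] in Hi. lia.
      * apply (NoDup_remove_1 _ _ z). rewrite <- HB. auto.
    + intros x [E|[E|Hi]].
      * subst. split; cbn [fst snd]; [apply Z.gcd_1_l|lia].
      * subst. split; cbn [fst snd]; [apply Z.gcd_1_r|lia].
      * apply Hl, HBin in Hi. tauto.
    + rewrite HB. simpl. rewrite !length_app. simpl. lia.
    + rewrite !kappaE, (sumf_perm f1 _ _ HP), (sumf_perm f2 _ _ HP).
      unfold sumf, f1, f2, z; cbn [fst snd map fold_right]. pose proof (Z.abs_nonneg (m-1)); pose proof (Z.abs_nonneg (p-1)); clear HP HB Hz Hl; lia.
  - intros X HXnd HXP HXl HXk.
    destruct (classic (exists y, in_P2o y /\ in_ball (p - 1) y /\ ~ In y X)) as [H|H1]; [left; exact H|].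
    destruct (classic (exists x, In x X /\ ~ (in_P2o x /\ in_ball p x))) as [H|H2]; [right; exact H|].
    exfalso.
    assert (HBX : incl B X).
    { intros y Hy. apply HBin in Hy as [Ha Hb]. apply NNPP. intros Hn. apply H1. eauto. }
    assert (HX2 : forall x, In x X -> in_P2o x /\ in_ball p x).
    { intros x Hx. apply NNPP. intros Hn. apply H2. eauto. }
    destruct (classic (exists x, In x X /\ ~ In x B)) as [[x [Hx HxB]]|H3].
    2:{ assert (incl X B).
        { intros x Hx. apply NNPP. intros Hn. apply H3. eauto. }
        pose proof (NoDup_incl_length HXnd H). lia. }
    assert (Hxn : Z.abs (fst x) + Z.abs (snd x) = p).
    { destruct (HX2 x Hx) as [Ha Hb]. unfold in_ball in Hb.
      assert (~ in_ball (p-1) x) by (intros Hc; apply HxB, HBin; auto).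
      unfold in_ball in H. lia. }
    assert (HP : Permutation (x :: B) X).
    { apply NoDup_Permutation_bis.
      - constructor; auto.
      - simpl. lia.
      - intros y [E|Hy]; [subst; auto|auto]. }
    rewrite !kappaE, <- (sumf_perm f1 _ _ HP), <- (sumf_perm f2 _ _ HP) in HXk.
    pose proof (sym (p-1) Hq) as Hs. fold B in Hs. unfold sumf, f1, f2 in *. cbn [fst snd map fold_right] in HXk.
    rewrite Hs in HXk. rewrite Z.max_id in HXk.
    destruct (HX2 x Hx) as [[G _] _].
    destruct x as [a b]; cbn [fst snd] in *.
    assert (Hab : Z.abs a <= m + 1 /\ Z.abs b <= m + 1) by lia.
    assert (Hc : (Z.abs a = m /\ Z.abs b = m) \/ (Z.abs a = 2*j /\ Z.abs b = 2*j+2) \/ (Z.abs a = 2*j+2 /\ Z.abs b = 2*j)) by lia.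
    destruct Hc as [[Ha Hb]|[[Ha Hb]|[Ha Hb]]].
    + assert (Hd : (m | Z.gcd a b)).
      { apply Z.gcd_greatest.
        - destruct (Z.abs_spec a) as [[_ E]|[_ E]]; [exists 1|exists (-1)]; lia.
        - destruct (Z.abs_spec b) as [[_ E]|[_ E]]; [exists 1|exists (-1)]; lia. }
      rewrite G in Hd. apply Z.divide_1_r in Hd. lia.
    + assert (Hd : (2 | Z.gcd a b)).
      { apply Z.gcd_greatest.
        - destruct (Z.abs_spec a) as [[_ E]|[_ E]]; [exists j|exists (-j)]; lia.
        - destruct (Z.abs_spec b) as [[_ E]|[_ E]]; [exists (j+1)|exists (-(j+1))]; lia. }
      rewrite G in Hd. apply Z.divide_1_r in Hd. lia.
    + assert (Hd : (2 | Z.gcd a b)).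
      { apply Z.gcd_greatest.
        - destruct (Z.abs_spec a) as [[_ E]|[_ E]]; [exists (j+1)|exists (-(j+1))]; lia.
        - destruct (Z.abs_spec b) as [[_ E]|[_ E]]; [exists j|exists (-j)]; lia. }
      rewrite G in Hd. apply Z.divide_1_r in Hd. lia.
Qed.
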